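(* Let $P\subseteq[0,1]^n$ be a polytope and $c\in\mathbb{R}^n$, and consider the instance $\mathcal{I}$: $\max\{c^\top x: x\in P\cap\{0,1\}^n\}$. Let $Q\subseteq[0,1]^{2n}$ be the convex hull of all points $(x,y)$ where $x$ is a vertex of $P$ and, for each $i$, $y_i=1$ if $x_i\in\{0,1\}$ and $y_i=0$ if $x_i\in(0,1)$. Let $BDG(\mathcal{I})$ be the instance $\max\{c^\top x:(x,y)\in Q,\ x\in\{0,1\}^n,\ y\in\{0,1\}^n\}$. Then $\{x:(x,y)\in Q\cap\{0,1\}^{2n}\}=P\cap\{0,1\}^n$ (so $BDG(\mathcal{I})$ is equivalent to $\mathcal{I}$), and there exists a branch-and-bound tree $\mathcal{T}^*(BDG(\mathcal{I}))$ that solves $BDG(\mathcal{I})$ with $|\mathcal{T}^*(BDG(\mathcal{I}))|\le 4n+1$.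
   Context: A branch-and-bound tree for a binary program over a polytope is a rooted binary tree in which each node corresponds to the polytope intersected with constraints fixing some variables to $0$ or $1$ (those fixed on the path from the root), and each internal node branches on one binary variable $z$, its two children adding $z=0$ and $z=1$ respectively. The tree solves the instance if at every leaf the LP relaxation is infeasible, or its optimal solution (an extreme point) is integral, or its value is no better than the best integral solution found at the leaves. $|\mathcal{T}|$ denotes the number of nodes. *)

(* Defs.v *)
From HB Require Import structures.
From mathcomp Require Import all_boot all_order all_algebra.
Set Implicit Arguments. Unset Strict Implicit. Unset Printing Implicit Defensive.
Import Order.TTheory GRing.Theory Num.Theory.
Local Open Scope ring_scope.

Section Defs.
Variable R : realFieldType.

Definition conv (m : nat) (A : 'rV[R]_m -> Prop) : 'rV[R]_m -> Prop :=
  fun x => exists (k : nat) (lam : 'I_k -> R) (p : 'I_k -> 'rV[R]_m),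
    (forall i, 0 <= lam i) /\ \sum_(i < k) lam i = 1 /\
    (forall i, A (p i)) /\ x = \sum_(i < k) lam i *: p i.

Definition is_polytope (m : nat) (P : 'rV[R]_m -> Prop) : Prop :=
  exists s : seq 'rV[R]_m, forall x, P x <-> conv (fun z => z \in s) x.

Definition is_vertex (m : nat) (F : 'rV[R]_m -> Prop) (x : 'rV[R]_m) : Prop :=
  F x /\ forall y z (t : R), F y -> F z -> 0 < t -> t < 1 ->
    x = t *: y + (1 - t) *: z -> y = z.

Definition binary (m : nat) (x : 'rV[R]_m) : Prop :=
  forall i, x 0 i = 0 \/ x 0 i = 1.

Definition dot (m : nat) (c x : 'rV[R]_m) : R := \sum_(i < m) c 0 i * x 0 i.

Definition int_indicator (n : nat) (x : 'rV[R]_n) : 'rV[R]_n :=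
  \row_i (if (x 0 i == 0) || (x 0 i == 1) then 1 else 0).

Definition bdg_hull (n : nat) (P : 'rV[R]_n -> Prop) : 'rV[R]_(n + n) -> Prop :=
  conv (fun z => exists x, is_vertex P x /\ z = row_mx x (int_indicator x)).

End Defs.

Inductive bbtree (m : nat) : Type :=
| BBLeaf : bbtree m
| BBNode : 'I_m -> bbtree m -> bbtree m -> bbtree m.
Arguments BBLeaf {m}.

Fixpoint bbsize (m : nat) (t : bbtree m) : nat :=
  match t with
  | BBLeaf => 1
  | BBNode _ t0 t1 => (bbsize t0 + bbsize t1).+1
  end.

Section BB.
Variables (R : realFieldType) (m : nat).

(* G is (extensionally) the LP feasible region of some leaf of t, when the
   root region is F; children of a node branching on j add z_j = 0 resp. z_j = 1 *)
Fixpoint is_leaf_region (t : bbtree m) (F G : 'rV[R]_m -> Prop) : Prop :=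
  match t with
  | BBLeaf => forall z, G z <-> F z
  | BBNode j t0 t1 =>
      is_leaf_region t0 (fun z => F z /\ z 0 j = 0) G \/
      is_leaf_region t1 (fun z => F z /\ z 0 j = 1) G
  end.

Definition lp_opt (F : 'rV[R]_m -> Prop) (c z : 'rV[R]_m) : Prop :=
  F z /\ forall w, F w -> dot c w <= dot c z.

Definition lp_infeasible (F : 'rV[R]_m -> Prop) : Prop := forall z, ~ F z.

Definition lp_integral (F : 'rV[R]_m -> Prop) (c : 'rV[R]_m) : Prop :=
  (exists z, lp_opt F c z /\ is_vertex F z) /\
  (forall z, lp_opt F c z -> is_vertex F z -> binary z).

Definition bb_solves (Q : 'rV[R]_m -> Prop) (c : 'rV[R]_m) (t : bbtree m) : Prop :=
  forall F, is_leaf_region t Q F ->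
    lp_infeasible F \/ lp_integral F c \/
    (forall w, F w -> exists G z, is_leaf_region t Q G /\ lp_integral G c /\
        lp_opt G c z /\ is_vertex G z /\ dot c w <= dot c z).

End BB.

(* Main.v *)
Require Import Defs.
From HB Require Import structures.
From mathcomp Require Import all_boot all_order all_algebra.
From mathcomp.algebra_tactics Require Import ring lra.
From Stdlib Require Import Classical.
From mathcomp Require Import zify.
Import Order.TTheory GRing.Theory Num.Theory.
Local Open Scope ring_scope.
Set Implicit Arguments. Unset Strict Implicit.

Section H.
Variable R : realFieldType.

Lemma coord_sum m K (lam : 'I_K -> R) (p : 'I_K -> 'rV[R]_m) j :
  (\sum_(k < K) lam k *: p k) 0 j = \sum_(k < K) lam k * p k 0 j.
Proof. by rewrite summxE; apply: eq_bigr => k _; rewrite mxE. Qed.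

Lemma force0 K (lam f : 'I_K -> R) :
  (forall k, 0 <= lam k) -> (forall k, 0 <= f k) ->
  \sum_(k < K) lam k * f k = 0 -> forall k, 0 < lam k -> f k = 0.
Proof.
move=> hl hf hs k hk.
have := psumr_eq0P (P := xpredT) (fun i _ => mulr_ge0 (hl i) (hf i)) hs (erefl true).
move=> /(_ k) /eqP; rewrite mulf_eq0 => /orP [/eqP h|/eqP //].
by move: hk; rewrite h ltxx.
Qed.

Lemma force1 K (lam f : 'I_K -> R) :
  (forall k, 0 <= lam k) -> (forall k, f k <= 1) -> \sum_(k < K) lam k = 1 ->
  \sum_(k < K) lam k * f k = 1 -> forall k, 0 < lam k -> f k = 1.
Proof.
move=> hl hf h1 hs k hk.
have H : \sum_(k < K) lam k * (1 - f k) = 0.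
  under eq_bigr do rewrite mulrBr mulr1.
  by rewrite sumrB h1 hs subrr.
have hf' : forall i, 0 <= 1 - f i by move=> i; rewrite subr_ge0.
have := @force0 K lam (fun k => 1 - f k) hl hf' H k hk.
by move=> /eqP; rewrite subr_eq0 => /eqP <-.
Qed.

Lemma exists_pos K (lam : 'I_K -> R) :
  (forall k, 0 <= lam k) -> \sum_(k < K) lam k = 1 -> exists k, 0 < lam k.
Proof.
move=> hl h1; apply: NNPP => hn.
have : \sum_(k < K) lam k = 0.
  apply: big1 => k _; apply/eqP; rewrite eq_le hl andbT.
  by rewrite leNgt; apply/negP => hk; apply: hn; exists k.
by rewrite h1 => /eqP; rewrite oner_eq0.
Qed.

Lemma sum_ge0' K (lam f : 'I_K -> R) :
  (forall k, 0 <= lam k) -> (forall k, 0 <= f k) -> 0 <= \sum_(k < K) lam k * f k.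
Proof. by move=> hl hf; apply: sumr_ge0 => k _; apply: mulr_ge0. Qed.

Lemma sum_le1' K (lam f : 'I_K -> R) :
  (forall k, 0 <= lam k) -> (forall k, f k <= 1) -> \sum_(k < K) lam k = 1 ->
  \sum_(k < K) lam k * f k <= 1.
Proof.
move=> hl hf h1; rewrite -h1; apply: ler_sum => k _.
by rewrite -{2}(mulr1 (lam k)); apply: ler_wpM2l.
Qed.

Lemma cube_vertex m (x y z : 'rV[R]_m) (t : R) :
  binary x -> (forall j, 0 <= y 0 j <= 1) -> (forall j, 0 <= z 0 j <= 1) ->
  0 < t -> t < 1 -> x = t *: y + (1 - t) *: z -> y = z.
Proof.
move=> hx hy hz t0 t1 e; apply/rowP => j.
have := congr1 (fun M : 'rV_m => M 0 j) e; rewrite !mxE.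
move: (hy j) (hz j) => /andP[y0 y1] /andP[z0 z1].
case: (hx j) => ->; nra.
Qed.

Lemma exmax (T : eqType) (s : seq T) (B : T -> Prop) (f : T -> R) :
  (exists b, b \in s /\ B b) ->
  exists b, B b /\ forall b', b' \in s -> B b' -> f b' <= f b.
Proof.
elim: s => [[b [] //]|a s IH] hex.
case: (classic (exists b, b \in s /\ B b)) => [/IH [b [Bb hb]]|hn].
  case: (classic (B a)) => Ba.
    case: (leP (f a) (f b)) => hab.
      exists b; split=> // b'; rewrite inE => /orP[/eqP ->//|]; exact: hb.
    exists a; split=> // b'; rewrite inE => /orP[/eqP ->//|] h /(hb _ h) h'.
    exact: le_trans h' (ltW hab).
  exists b; split=> // b'; rewrite inE => /orP[/eqP ->//|]; exact: hb.
have Ba : B a.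
  case: hex => b []; rewrite inE => /orP[/eqP -> //|] h hb; exfalso; apply: hn; by exists b.
exists a; split=> // b'; rewrite inE => /orP[/eqP ->//|] h hb'.
exfalso; apply: hn; by exists b'.
Qed.

End H.

Section H2.
Variables (R : realFieldType) (n : nat) (P : 'rV[R]_n -> Prop).
Hypothesis hP : forall x, P x -> forall i, 0 <= x 0 i <= 1.

Lemma ind_E (x : 'rV[R]_n) i : int_indicator x 0 i = if (x 0 i == 0) || (x 0 i == 1) then 1 else 0.
Proof. by rewrite mxE. Qed.

Lemma ind_01 (x : 'rV[R]_n) i : 0 <= int_indicator x 0 i <= 1.
Proof. by rewrite ind_E; case: ifP; rewrite ?lexx ?ler01. Qed.

Lemma ind_1 (x : 'rV[R]_n) i : int_indicator x 0 i = 1 -> x 0 i = 0 \/ x 0 i = 1.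
Proof.
rewrite ind_E; case: ifP => [/orP [/eqP ->|/eqP ->] _|_ /eqP]; [by left|by right|].
by rewrite eq_sym oner_eq0.
Qed.

Lemma ind_0 (x : 'rV[R]_n) i : P x -> int_indicator x 0 i = 0 -> 0 < x 0 i < 1.
Proof.
move=> Px; rewrite ind_E; case: ifP => [_ /eqP|/negbT]; first by rewrite oner_eq0.
rewrite negb_or => /andP [h0 h1] _; move: (hP Px i) => /andP [a b].
by rewrite !lt_def a b h0 (eq_sym 1) h1.
Qed.

Lemma split_all (T : 'I_(n+n) -> Prop) :
  (forall i, T (lshift n i)) -> (forall i, T (rshift n i)) -> forall j, T j.
Proof. by move=> hl hr j; rewrite -(splitK j); case: (split j) => i /=. Qed.

Lemma gen_props (q : 'rV[R]_(n+n)) :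
  (exists x, is_vertex P x /\ q = row_mx x (int_indicator x)) ->
  is_vertex P (lsubmx q) /\ q = row_mx (lsubmx q) (int_indicator (lsubmx q)).
Proof. by case=> x [hx ->]; rewrite row_mxKl. Qed.

Lemma Qdecomp z : bdg_hull P z ->
  exists K (lam : 'I_K -> R) (p : 'I_K -> 'rV[R]_(n+n)),
   (forall k, 0 <= lam k) /\ \sum_(k < K) lam k = 1 /\
   (forall k, is_vertex P (lsubmx (p k))) /\
   (forall k, p k = row_mx (lsubmx (p k)) (int_indicator (lsubmx (p k)))) /\
   z = \sum_(k < K) lam k *: p k /\
   (forall i, z 0 (lshift n i) = \sum_(k < K) lam k * lsubmx (p k) 0 i) /\
   (forall i, z 0 (rshift n i) = \sum_(k < K) lam k * int_indicator (lsubmx (p k)) 0 i).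
Proof.
case=> K [lam [p [hl [h1 [hA ->]]]]].
exists K, lam, p; split=> //; split=> //.
split; first by move=> k; exact: (proj1 (gen_props (hA k))).
split; first by move=> k; exact: (proj2 (gen_props (hA k))).
split=> //; split=> i; rewrite coord_sum; apply: eq_bigr => k _.
  by rewrite mxE.
by case: (gen_props (hA k)) => _ {1}->; rewrite row_mxEr.
Qed.

Lemma Q01 z : bdg_hull P z -> forall j, 0 <= z 0 j <= 1.
Proof.
move=> /Qdecomp [K [lam [p [hl [h1 [hv [hp [_ [hx hy]]]]]]]]].
apply: split_all => i; [rewrite hx|rewrite hy]; apply/andP; split.
- by apply: sum_ge0' => // k; case/andP: (hP (proj1 (hv k)) i).
- by apply: sum_le1' => // k; case/andP: (hP (proj1 (hv k)) i).
- by apply: sum_ge0' => // k; case/andP: (ind_01 (lsubmx (p k)) i).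
- by apply: sum_le1' => // k; case/andP: (ind_01 (lsubmx (p k)) i).
Qed.

Lemma Qy0 z i : bdg_hull P z -> z 0 (rshift n i) = 0 -> 0 < z 0 (lshift n i) < 1.
Proof.
move=> hz; have hb := Q01 hz.
move: hz => /Qdecomp [K [lam [p [hl [h1 [hv [hp [_ [hx hy]]]]]]]]] hz0.
have hfr : forall k, 0 < lam k -> 0 < lsubmx (p k) 0 i < 1.
  move=> k hk; apply: ind_0; first exact: (proj1 (hv k)).
  apply: (@force0 _ K lam (fun k => int_indicator (lsubmx (p k)) 0 i) hl _ _ k hk).
    by move=> k'; case/andP: (ind_01 (lsubmx (p k')) i).
  by rewrite -hy.
case: (exists_pos hl h1) => k hk.
move: (hb (lshift n i)) => /andP [a b].
suff [h0 h1'] : z 0 (lshift n i) != 0 /\ z 0 (lshift n i) != 1.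
  by rewrite !lt_def a b h0 (eq_sym 1) h1'.
split; apply/negP => /eqP he.
- have := force0 hl (fun k => proj1 (andP (hP (proj1 (hv k)) i))) (etrans (esym (hx i)) he) hk.
  by move: (hfr k hk) => /andP [h _] e; move: h; rewrite e ltxx.
- have := force1 hl (fun k => proj2 (andP (hP (proj1 (hv k)) i))) h1 (etrans (esym (hx i)) he) hk => e.
  by move: (hfr k hk) => /andP [_ h]; move: h; rewrite e ltxx.
Qed.

End H2.

Section H3.
Variables (R : realFieldType) (n : nat) (P : 'rV[R]_n -> Prop).
Hypothesis hP : forall x, P x -> forall i, 0 <= x 0 i <= 1.

Lemma bin_vertex x : P x -> binary x -> is_vertex P x.
Proof.
move=> Px hb; split=> // y z t Py Pz t0 t1 e.
exact: (cube_vertex hb (hP Py) (hP Pz) t0 t1 e).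
Qed.

Lemma ind_bin (x : 'rV[R]_n) i : binary x -> int_indicator x 0 i = 1.
Proof. by move=> hb; rewrite ind_E; case: (hb i) => ->; rewrite ?eqxx ?orbT. Qed.

Lemma single_Q x : is_vertex P x -> bdg_hull P (row_mx x (int_indicator x)).
Proof.
move=> hx; exists 1%N, (fun _ => 1), (fun _ => row_mx x (int_indicator x)).
split=> //; split; first by rewrite big_ord1.
split; first by move=> _; exists x.
by rewrite big_ord1 scale1r.
Qed.

Lemma part1 x : (exists y, bdg_hull P (row_mx x y) /\ binary (row_mx x y)) <-> P x /\ binary x.
Proof.
split.
  case=> y [hQ hb].
  have bx : binary x by move=> i; move: (hb (lshift n i)); rewrite row_mxEl.
  split=> //.
  move: hQ => /Qdecomp [K [lam [p [hl [h1 [hv [hp [_ [hx hy]]]]]]]]].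
  case: (exists_pos hl h1) => k hk.
  suff <- : lsubmx (p k) = x by exact: (proj1 (hv k)).
  apply/rowP => i; move: (hx i); rewrite row_mxEl.
  case: (bx i) => -> e.
    apply: (@force0 _ K lam (fun k => lsubmx (p k) 0 i) hl _ (esym e) k hk).
    by move=> k'; case/andP: (hP (proj1 (hv k')) i).
  apply: (@force1 _ K lam (fun k => lsubmx (p k) 0 i) hl _ h1 (esym e) k hk).
  by move=> k'; case/andP: (hP (proj1 (hv k')) i).
case=> Px bx; exists (int_indicator x); split.
  exact: single_Q (bin_vertex Px bx).
apply: split_all => i; rewrite ?row_mxEl ?row_mxEr //.
by right; apply: ind_bin.
Qed.

End H3.

Section H4.
Variables (R : realFieldType) (n : nat) (P : 'rV[R]_n -> Prop).
Hypothesis hP : forall x, P x -> forall i, 0 <= x 0 i <= 1.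
Variable (G : 'rV[R]_(n+n) -> Prop).
Hypothesis HG : forall z, G z <-> bdg_hull P z /\ forall i, z 0 (rshift n i) = 1.

Lemma lam_cases (x : R) : 0 <= x -> x = 0 \/ 0 < x.
Proof. by rewrite le_eqVlt => /orP [/eqP <-|]; [left|right]. Qed.

Lemma G_gen z : G z ->
  exists K (lam : 'I_K -> R) (p : 'I_K -> 'rV[R]_(n+n)),
   (forall k, 0 <= lam k) /\ \sum_(k < K) lam k = 1 /\
   (forall k, is_vertex P (lsubmx (p k))) /\
   (forall k, p k = row_mx (lsubmx (p k)) (int_indicator (lsubmx (p k)))) /\
   z = \sum_(k < K) lam k *: p k /\
   (forall i, z 0 (lshift n i) = \sum_(k < K) lam k * lsubmx (p k) 0 i) /\
   (forall k, 0 < lam k -> binary (lsubmx (p k))).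
Proof.
move=> /HG [/Qdecomp [K [lam [p [hl [h1 [hv [hp [hz [hx hy]]]]]]]]] h1y].
exists K, lam, p; do 6 (split => //).
move=> k hk i; apply: ind_1.
apply: (@force1 _ K lam (fun k => int_indicator (lsubmx (p k)) 0 i) hl _ h1 _ k hk).
  by move=> k'; case/andP: (ind_01 (lsubmx (p k')) i).
by rewrite -hy h1y.
Qed.

Lemma split_bin z : is_vertex G z -> binary z.
Proof.
move=> [Gz hvert].
move: (Gz) => /G_gen [K [lam [p [hl [h1 [hv [hp [hz [hx hbin]]]]]]]]].
apply: split_all; last by move=> i; right; case/HG: Gz => _ ->.
move=> i; apply: NNPP => hn.
set e := fun k => lsubmx (p k) 0 i.
have he0 : forall k, 0 <= e k by move=> k; case/andP: (hP (proj1 (hv k)) i).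
have he1 : forall k, e k <= 1 by move=> k; case/andP: (hP (proj1 (hv k)) i).
set s := z 0 (lshift n i).
have hs : s = \sum_(k < K) lam k * e k by rewrite /s hx.
have sn0 : s != 0 by apply/negP => /eqP h; apply: hn; left.
have sn1 : s != 1 by apply/negP => /eqP h; apply: hn; right.
have s0 : 0 < s by rewrite lt_def sn0 hs sum_ge0'.
have s1 : s < 1 by rewrite lt_def eq_sym sn1 hs sum_le1'.
have s1n0 : 1 - s != 0 by rewrite subr_eq0 eq_sym.
have ebin : forall k, 0 < lam k -> e k = 0 \/ e k = 1 by move=> k hk; apply: hbin.
set wb := fun k => lam k * e k / s.
set wa := fun k => lam k * (1 - e k) / (1 - s).
have wb0 : forall k, 0 <= wb k.
  by move=> k; rewrite /wb divr_ge0 ?mulr_ge0 // ltW.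
have wa0 : forall k, 0 <= wa k.
  by move=> k; rewrite /wa divr_ge0 ?mulr_ge0 // ?subr_ge0 // ltW // subr_gt0.
have wb1 : \sum_(k < K) wb k = 1 by rewrite /wb -mulr_suml -hs divff.
have wa1 : \sum_(k < K) wa k = 1.
  rewrite /wa -mulr_suml.
  have -> : \sum_(k < K) lam k * (1 - e k) = 1 - s.
    under eq_bigr do rewrite mulrBr mulr1.
    by rewrite sumrB h1 hs.
  by rewrite divff.
have gens : forall k, exists x, is_vertex P x /\ p k = row_mx x (int_indicator x).
  by move=> k; exists (lsubmx (p k)).
have Gw : forall w : 'I_K -> R, (forall k, 0 <= w k) -> \sum_(k < K) w k = 1 ->
    (forall k, lam k = 0 -> w k = 0) -> G (\sum_(k < K) w k *: p k).
  move=> w w0 w1 wl; apply/HG; split; first by exists K, w, p.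
  move=> j; rewrite coord_sum -[RHS]w1; apply: eq_bigr => k _.
  rewrite (hp k) row_mxEr.
  case: (lam_cases (hl k)) => [/wl ->|hk]; first by rewrite !mul0r.
  by rewrite ind_bin ?mulr1 //; apply: hbin.
have Gb : G (\sum_(k < K) wb k *: p k).
  by apply: Gw => // k h; rewrite /wb h !mul0r.
have Ga : G (\sum_(k < K) wa k *: p k).
  by apply: Gw => // k h; rewrite /wa h !mul0r.
have ez : z = s *: (\sum_(k < K) wb k *: p k) + (1 - s) *: (\sum_(k < K) wa k *: p k).
  rewrite hz !scaler_sumr -big_split; apply: eq_bigr => k _ /=.
  rewrite !scalerA -scalerDl; congr (_ *: _).
  rewrite /wb /wa; field; by rewrite sn0 s1n0.
have := hvert _ _ _ Gb Ga s0 s1 ez.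
move=> /(congr1 (fun M : 'rV_(n+n) => M 0 (lshift n i))).
rewrite !coord_sum.
have -> : \sum_(k < K) wb k * p k 0 (lshift n i) = 1.
  rewrite -wb1; apply: eq_bigr => k _; rewrite (hp k) row_mxEl -/(e k).
  case: (lam_cases (hl k)) => [h|hk]; first by rewrite /wb h !mul0r.
  by rewrite /wb; case: (ebin k hk) => ->; rewrite ?mulr1 // !mulr0 ?mul0r.
have -> : \sum_(k < K) wa k * p k 0 (lshift n i) = 0.
  apply: big1 => k _; rewrite (hp k) row_mxEl -/(e k).
  case: (lam_cases (hl k)) => [h|hk]; first by rewrite /wa h !mul0r.
  by rewrite /wa; case: (ebin k hk) => ->; rewrite ?mulr0 // subrr !mulr0 ?mul0r.
by move/eqP; rewrite oner_eq0.
Qed.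

End H4.

Section H5.
Variables (R : realFieldType) (n : nat) (P : 'rV[R]_n -> Prop) (c : 'rV[R]_n).
Hypothesis hP : forall x, P x -> forall i, 0 <= x 0 i <= 1.
Variable (G : 'rV[R]_(n+n) -> Prop).
Hypothesis HG : forall z, G z <-> bdg_hull P z /\ forall i, z 0 (rshift n i) = 1.

Lemma dot_row (w : 'rV[R]_(n+n)) :
  dot (row_mx c 0) w = \sum_(i < n) c 0 i * w 0 (lshift n i).
Proof.
rewrite /dot big_split_ord /=.
rewrite [X in _ + X]big1 ?addr0; last by move=> i _; rewrite row_mxEr mxE mul0r.
by apply: eq_bigr => i _; rewrite row_mxEl.
Qed.

Definition rowb (b : {ffun 'I_n -> bool}) : 'rV[R]_n := \row_i (b i)%:R.

Lemma rowb_bin b : binary (rowb b).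
Proof. by move=> i; rewrite mxE; case: (b i); [right|left]. Qed.

Lemma rowb_of (v : 'rV[R]_n) : binary v -> rowb [ffun i => v 0 i == 1] = v.
Proof.
move=> hb; apply/rowP => i; rewrite !mxE ffunE.
case: (hb i) => ->; rewrite ?eqxx //.
by rewrite eq_sym oner_eq0.
Qed.

Lemma final_exists : (exists w, G w) -> exists z, lp_opt G (row_mx c 0) z /\ is_vertex G z.
Proof.
move=> [w Gw].
pose B := fun b => is_vertex P (rowb b).
pose f := fun b => dot c (rowb b).
have [bs [Bbs hbs]] : exists bs, B bs /\ forall b', b' \in enum {ffun 'I_n -> bool} -> B b' -> f b' <= f bs.
  apply: exmax.
  move: Gw => /(G_gen HG) [K [lam [p [hl [h1 [hv [hp [hz [hx hbin]]]]]]]]].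
  case: (exists_pos hl h1) => k hk.
  exists [ffun i => lsubmx (p k) 0 i == 1]; split; first by rewrite mem_enum.
  by rewrite /B (rowb_of (hbin k hk)); exact: hv.
have bz : binary (row_mx (rowb bs) (int_indicator (rowb bs))).
  apply: split_all => i; first by rewrite row_mxEl; exact: rowb_bin.
  by rewrite row_mxEr; right; apply: ind_bin; apply: rowb_bin.
have Gz : G (row_mx (rowb bs) (int_indicator (rowb bs))).
  apply/HG; split; first exact: single_Q.
  by move=> i; rewrite row_mxEr; apply: ind_bin; apply: rowb_bin.
exists (row_mx (rowb bs) (int_indicator (rowb bs))); split; split => //.
  move=> w' Gw'; rewrite !dot_row.
  under [X in _ <= X]eq_bigr do rewrite row_mxEl.
  move: Gw' => /(G_gen HG) [K [lam [p [hl [h1 [hv [hp [hz [hx hbin]]]]]]]]].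
  under [X in X <= _]eq_bigr do rewrite hx mulr_sumr.
  rewrite exchange_big /=.
  have -> : \sum_(i < n) c 0 i * rowb bs 0 i = \sum_(k < K) lam k * f bs.
    by rewrite -mulr_suml h1 mul1r.
  apply: ler_sum => k _.
  have -> : \sum_(i < n) c 0 i * (lam k * lsubmx (p k) 0 i) = lam k * dot c (lsubmx (p k)).
    by rewrite /dot mulr_sumr; apply: eq_bigr => i _; rewrite mulrCA.
  case: (lam_cases (hl k)) => [->|hk]; first by rewrite !mul0r.
  apply: ler_wpM2l; first exact: hl.
  rewrite -(rowb_of (hbin k hk)); apply: hbs; first by rewrite mem_enum.
  by rewrite /B (rowb_of (hbin k hk)); exact: hv.
move=> y z t Gy Gz' t0 t1 e.
have Qy := proj1 (proj1 (HG y) Gy).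
have Qz := proj1 (proj1 (HG z) Gz').
exact: (cube_vertex bz (Q01 hP Qy) (Q01 hP Qz) t0 t1 e).
Qed.

Lemma final_integral : (exists w, G w) -> lp_integral G (row_mx c 0).
Proof.
move=> hw; split; first exact: final_exists.
by move=> z _ hv; apply: (split_bin hP HG).
Qed.

End H5.

Fixpoint build (n : nat) (l : seq 'I_n) : bbtree (n + n) :=
  match l with
  | [::] => BBLeaf
  | i :: l' => BBNode (rshift n i) (BBNode (lshift n i) BBLeaf BBLeaf) (build l')
  end.

Lemma build_size n (l : seq 'I_n) : bbsize (build l) = (4 * size l + 1)%N.
Proof. by elim: l => [|i l IH] //=; rewrite IH; lia. Qed.

Section H6.
Variables (R : realFieldType) (n : nat) (P : 'rV[R]_n -> Prop).
Hypothesis hP : forall x, P x -> forall i, 0 <= x 0 i <= 1.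

Lemma leaves (l : seq 'I_n) : forall F G, (forall z, F z -> bdg_hull P z) ->
  is_leaf_region (build l) F G ->
  lp_infeasible G \/ (forall z, G z <-> F z /\ forall i, i \in l -> z 0 (rshift n i) = 1).
Proof.
elim: l => [|i l IH] F G hF /=.
  by move=> h; right => z; rewrite h; split; [move=> ?; split|case].
case=> [[h|h]|h].
- left => z /h [[/hF hz hy] hx].
  by move: (Qy0 hP hz hy); rewrite hx ltxx.
- left => z /h [[/hF hz hy] hx].
  by move: (Qy0 hP hz hy); rewrite hx ltxx andbF.
have hF' : forall z, F z /\ z 0 (rshift n i) = 1 -> bdg_hull P z by move=> z [/hF].
case: (IH _ G hF' h) => [|hG]; first by left.
right => z; rewrite hG; split.
  move=> [[Fz hy] hl]; split=> // j; rewrite inE => /orP [/eqP ->//|]; exact: hl.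
move=> [Fz hl]; split; first by split=> //; apply: hl; rewrite inE eqxx.
by move=> j hj; apply: hl; rewrite inE hj orbT.
Qed.

End H6.
Unset Implicit Arguments. Set Strict Implicit.

Theorem proposition2p5 (R : realFieldType) (n : nat)
    (P : 'rV[R]_n -> Prop) (c : 'rV[R]_n) :
  is_polytope P ->
  (forall x, P x -> forall i, 0 <= x 0 i <= 1) ->
  (forall x : 'rV[R]_n,
     (exists y : 'rV[R]_n, bdg_hull P (row_mx x y) /\ binary (row_mx x y)) <->
     (P x /\ binary x)) /\
  exists t : bbtree (n + n),
    bb_solves (bdg_hull P) (row_mx c 0) t /\ (bbsize t <= 4 * n + 1)%N.
Proof.
move=> _ hP; split; first exact: part1.
exists (build (enum 'I_n)); split; last by rewrite build_size size_enum_ord.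
move=> F hF.
case: (leaves hP (fun z h => h) hF) => [inf|hG]; first by left.
case: (classic (exists w, F w)) => [hw|hn]; last by left => z Fz; apply: hn; exists z.
right; left; apply: (final_integral c hP) => //.
move=> z; rewrite hG; split=> [[hz hy]|[hz hy]]; split=> // i.
  by apply: hy; rewrite mem_enum.
Qed.
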